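(* Let $x\in\mathcal{X}$. Then $x$ is bilevel feasible if and only if $c^\top x = g(x_{\mathcal{A}_1})$.
   Context: Single-commodity network pricing setting: $G=(\mathcal{V},\mathcal{A})$ is a directed graph with arc costs $c\ge0$, arcs partitioned into a nonempty set $\mathcal{A}_1\subsetneq\mathcal{A}$ of tolled arcs and toll-free arcs $\mathcal{A}_2=\mathcal{A}\setminus\mathcal{A}_1$, $n=|\mathcal{A}_1|$; $N$ is the node–arc incidence matrix; there is one commodity with origin $o$ and destination $d$ and an $o$–$d$ path of toll-free arcs exists; $b_o=1$, $b_d=-1$, $b_i=0$ otherwise. Let $\mathcal{X}=\{x\in\mathbb{R}^{\mathcal{A}}: Nx=b,\ x\ge0\}$ and, for $x\in\mathbb{R}^{\mathcal{A}}$, let $x_{\mathcal{A}_1}\in\mathbb{R}^n$ be its restriction to $\mathcal{A}_1$. Define $f:\mathbb{R}^n\to\mathbb{R}\cup\{-\infty\}$ by $f(t)=\min\{c^\top x+t^\top x_{\mathcal{A}_1}: x\in\mathcal{X}\}$ for $t\ge0$ and $f(t)=-\infty$ otherwise, and $g(w)=\sup_{t\in\mathbb{R}^n}\{f(t)-t^\top w\}$ for $w\in\mathbb{R}^n$. A point $x\in\mathcal{X}$ is called bilevel feasible if the hyperplane $\{(t,z)\in\mathbb{R}^n\times\mathbb{R}: z=-c^\top x-t^\top x_{\mathcal{A}_1}\}$ supports the epigraph $\operatorname{epi}(-f)$, i.e. $\operatorname{epi}(-f)\subseteq\{(t,z): z\ge -c^\top x - t^\top x_{\mathcal{A}_1}\}$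 and the hyperplane meets $\operatorname{epi}(-f)$. *)

(* Defs.v *)
From HB Require Import structures.
From mathcomp Require Import all_boot all_order all_algebra.
From mathcomp Require Import all_classical all_reals all_analysis.
Unset Printing Implicit Defensive.
Import Order.TTheory GRing.Theory Num.Theory.
Local Open Scope classical_set_scope.
Local Open Scope ring_scope.

Section NetworkPricing.
Variables (R : realType) (V A : finType) (src tgt : A -> V).

(* index type of tolled arcs: R^n with n = #|A1| is modelled as tolled A1 -> R *)
Definition tolled (A1 : {set A}) := {a : A | a \in A1}.

Definition incidence (i : V) (a : A) : R := (src a == i)%:R - (tgt a == i)%:R.

Definition supply (o d : V) (i : V) : R :=
  if i == o then 1 else if i == d then -1 else 0.

Definition flows (o d : V) : set (A -> R) :=
  [set x | (forall i, \sum_(a : A) incidence i a * x a = supply o d i)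
           /\ (forall a, 0 <= x a)].

Fixpoint walk (u v : V) (s : seq A) : bool :=
  match s with
  | [::] => u == v
  | a :: s' => (src a == u) && walk (tgt a) v s'
  end.

Definition cost (c x : A -> R) : R := \sum_(a : A) c a * x a.

Definition restr (A1 : {set A}) (x : A -> R) : tolled A1 -> R :=
  fun a => x (val a).


Definition dot (A1 : {set A}) (t w : tolled A1 -> R) : R :=
  \sum_(a : tolled A1) t a * w a.

Definition fval (c : A -> R) (A1 : {set A}) (o d : V) (t : tolled A1 -> R)
  : \bar R :=
  if `[< forall a, 0 <= t a >] then
    ereal_inf [set (cost c x + dot A1 t (restr A1 x))%:E | x in flows o d]
  else -oo%E.

Definition gval (c : A -> R) (A1 : {set A}) (o d : V) (w : tolled A1 -> R)
  : \bar R :=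
  ereal_sup (range (fun t : tolled A1 -> R => (fval c A1 o d t - (dot A1 t w)%:E)%E)).

Definition epi_negf (c : A -> R) (A1 : {set A}) (o d : V)
  : set ((tolled A1 -> R) * R) :=
  [set tz | (- fval c A1 o d tz.1 <= tz.2%:E)%E].

(* x is bilevel feasible: the hyperplane z = -c^T x - t^T x_{A1} supports epi(-f) *)
Definition bilevel_feasible (c : A -> R) (A1 : {set A}) (o d : V) (x : A -> R)
  : Prop :=
  epi_negf c A1 o d `<=` [set tz | - cost c x - dot A1 tz.1 (restr A1 x) <= tz.2]
  /\ exists tz, epi_negf c A1 o d tz /\ tz.2 = - cost c x - dot A1 tz.1 (restr A1 x).

End NetworkPricing.

(* Main.v *)
Require Import Defs.
From HB Require Import structures.
From mathcomp Require Import all_boot all_order all_algebra.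
From mathcomp Require Import all_classical all_reals all_analysis.
From mathcomp Require Import lra.
Import Order.TTheory GRing.Theory Num.Theory.
Import numFieldNormedType.Exports.
Local Open Scope classical_set_scope.
Local Open Scope ring_scope.

Module Topo.
Import ArrowAsProduct.
Section S.
Variables (R : realType) (I : finType).

Lemma box_compact (b : I -> R) :
  compact [set t : forall i : I, (fun=> R) i | forall i, `[0, b i]%classic (t i)].
Proof. exact: (@tychonoff I (fun=> R) (fun i => `[0, b i]%classic) (fun i => @segment_compact R 0 (b i))). Qed.

Lemma lin_cont (al : I -> R) :
  continuous (fun t : forall i : I, (fun=> R) i => \sum_i t i * al i).
Proof.
elim: (index_enum I) => [|j r IH].
  have -> : (fun t : forall i : I, (fun=> R) i => \sum_(i <- [::]) t i * al i) = cst 0.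
    by apply: funext => t; rewrite big_nil.
  exact: cst_continuous.
have -> : (fun t : forall i : I, (fun=> R) i => \sum_(i <- j :: r) t i * al i) =
  (fun t : forall i : I, (fun=> R) i => t j * al j) + (fun t : forall i : I, (fun=> R) i => \sum_(i <- r) t i * al i).
  by apply: funext => t; rewrite big_cons.
move=> t; apply: continuousD; last exact: IH.
apply: continuousM; last exact: cst_continuous.
exact: (@proj_continuous I (fun=> R) j).
Qed.

Lemma lin_closed (al : I -> R) (be : R) :
  closed [set t : forall i : I, (fun=> R) i | be <= \sum_i t i * al i].
Proof.
have -> : [set t : forall i : I, (fun=> R) i | be <= \sum_i t i * al i] =
  (fun t : forall i : I, (fun=> R) i => \sum_i t i * al i) @^-1` [set x | be <= x] by [].
apply: preimage_closed; last exact: closed_ge.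
move=> t _; exact: lin_cont.
Qed.


Lemma compact_lin (b : I -> R) (J : Type) (Q : J -> Prop) (al : J -> I -> R) (be : J -> R) :
 (forall n : nat, exists t : I -> R, (forall i, 0 <= t i <= b i) /\
    forall j, Q j -> be j - (n.+1%:R)^-1 <= \sum_i t i * al j i) ->
 exists t : I -> R, (forall i, 0 <= t i <= b i) /\
    forall j, Q j -> be j <= \sum_i t i * al j i.
Proof.
move=> H.
pose K := [set t : forall i : I, (fun=> R) i | forall i, `[0, b i]%classic (t i)].
pose G (n : nat) := \bigcap_(j in Q) [set t : forall i : I, (fun=> R) i |
   be j - (n.+1%:R)^-1 <= \sum_i t i * al j i].
have finIf : finI setT (fun n => K `&` G n).
  move=> D' _.
  pose N := (\max_(i <- finmap.enum_fset D') i)%N.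
  have [t [tb tj]] := H N.
  exists t => n nD; split.
    by move=> i; rewrite /= in_itv /=; exact: tb.
  move=> j Qj /=; apply: le_trans (tj j Qj); rewrite lerD2l lerN2.
  rewrite lef_pV2 ?posrE ?ltr0n // ler_nat ltnS.
  exact: (@leq_bigmax_seq _ _ xpredT id n).
have [|p [Kp clp]] := box_compact b _ (finI_filter finIf).
  by exists (K `&` G 0%N); [apply: finI_from1 | move=> ? []].
have Ht : forall n, K p /\ G n p.
  move=> n; split => //.
  have : closed (G n) by apply: closed_bigI => j _; exact: lin_closed.
  apply => B /(clp (K `&` G n)) [].
    by exists (K `&` G n) => //; apply: finI_from1.
  by move=> q [[_ Gq] Bq]; exists q.
exists p; split.
  by move=> i; have := Kp i; rewrite /= in_itv.
move=> j Qj; apply/ler_addgt0Pr => e e0.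
have [n ne] : exists n : nat, (n.+1%:R)^-1 < e.
  exists (Num.bound e^-1); rewrite -[X in _ < X]invrK ltf_pV2 ?posrE ?ltr0n ?invr_gt0 //.
  apply: lt_trans (archi_boundP _) _; first by rewrite invr_ge0 ltW.
  by rewrite ltr_nat.
have [_ /(_ j Qj) /=] := Ht n.
rewrite lerBlDr => h; apply: le_trans h _; rewrite lerD2l ltW //.
Qed.

End S.
End Topo.

Section G.
Variables (R : realType) (V A : finType) (src tgt : A -> V).

Definition cnt (P : seq A) : A -> R := fun a => (count_mem a P)%:R.

Lemma sum_pred1 (T : finType) (q : T -> R) (u : T) :
  \sum_i q i * (u == i)%:R = q u.
Proof.
rewrite (bigD1 u) //= eqxx mulr1 big1 ?addr0 // => i /negPf.
by rewrite eq_sym => ->; rewrite mulr0.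
Qed.

Lemma sum_pred1' (T : finType) (q : T -> R) (u : T) :
  \sum_i q i * (i == u)%:R = q u.
Proof. by rewrite -(sum_pred1 _ q u); apply: eq_bigr => i _; rewrite eq_sym. Qed.

Lemma cost_cons (k : A -> R) a P :
  \sum_b k b * cnt (a :: P) b = k a + \sum_b k b * cnt P b.
Proof.
rewrite /cnt /= -sum_pred1 -big_split /=; apply: eq_bigr => b _.
by rewrite natrD mulrDr.
Qed.

Lemma cost_nil (k : A -> R) : \sum_b k b * cnt [::] b = 0.
Proof. by rewrite big1 // => b _; rewrite /cnt /= mulr0. Qed.

Lemma walk_inc u v P : walk V A src tgt u v P ->
  forall i, \sum_a incidence R V A src tgt i a * cnt P a = (i == u)%:R - (i == v)%:R.
Proof.
elim: P u => [|a P IH] u /=.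
  by move=> /eqP -> i; rewrite cost_nil subrr.
move=> /andP [/eqP sa wP] i.
rewrite (cost_cons (incidence R V A src tgt i)) (IH _ wP) /incidence sa.
by rewrite [(u == i)]eq_sym [(tgt a == i)]eq_sym addrA subrK.
Qed.
Arguments walk_inc {u v P}.

Lemma cnt_ge0 P a : 0 <= cnt P a.
Proof. exact: ler0n. Qed.

Lemma supplyE o d i : o != d -> supply R V o d i = (i == o)%:R - (i == d)%:R.
Proof.
move=> od; rewrite /supply; case: (i =P o) => [->|/eqP io].
  by rewrite ?eqxx (negPf od) /= subr0.
case: (i =P d) => [_|_].
  by rewrite ?eqxx /= sub0r.
by rewrite /= subr0.
Qed.

Lemma walk_flows o d P : o != d -> walk V A src tgt o d P ->
  flows R V A src tgt o d (cnt P).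
Proof.
move=> od wP; split; last exact: cnt_ge0.
by move=> i; rewrite (walk_inc wP) supplyE.
Qed.

Lemma pot o d (od : o != d) (k : A -> R) (k0 : forall a, 0 <= k a) (L : R) :
  (forall P, walk V A src tgt o d P -> L <= \sum_a k a * cnt P a) ->
  forall y, flows R V A src tgt o d y -> L <= \sum_a k a * y a.
Proof.
move=> HP y [yN y0].
pose S u := [set r : R | r = L \/ exists P, walk V A src tgt u d P /\ r = \sum_a k a * cnt P a].
pose q u := inf (S u).
have lbS u : has_lbound (S u).
  exists (Num.min L 0) => r [->|[P [_ ->]]]; first by rewrite ge_min lexx.
  rewrite ge_min; apply/orP; right; apply: sumr_ge0 => a _.
  by apply: mulr_ge0 => //; exact: cnt_ge0.
have neS u : S u !=set0 by exists L; left.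
have qo : L <= q o.
  by apply: lb_le_inf => // r [->|[P [wP ->]]]; [exact: lexx|exact: HP].
have qd : q d <= 0.
  apply: ge_inf => //; right; exists [::]; split; first by rewrite /= eqxx.
  by rewrite cost_nil.
have tri a : q (src a) - q (tgt a) <= k a.
  suff h : q (src a) - k a <= q (tgt a) by lra.
  apply: lb_le_inf => // r [->|[P [wP ->]]].
    have : q (src a) <= L by apply: ge_inf => //; left.
    have := k0 a; lra.
  have : q (src a) <= k a + \sum_b k b * cnt P b.
    rewrite -cost_cons; apply: ge_inf => //; right.
    by exists (a :: P); split => //=; rewrite eqxx.
  lra.
have -> : \sum_a k a * y a = \sum_a (k a - (q (src a) - q (tgt a))) * y a
       + \sum_a (q (src a) - q (tgt a)) * y a.
  by rewrite -big_split /=; apply: eq_bigr => a _; rewrite -mulrDl subrK.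
have -> : \sum_a (q (src a) - q (tgt a)) * y a = q o - q d.
  transitivity (\sum_a \sum_i q i * (incidence R V A src tgt i a * y a)).
    apply: eq_bigr => a _; under [RHS]eq_bigr do rewrite mulrA.
    rewrite -big_distrl /=; congr (_ * _).
    by rewrite /incidence; under eq_bigr do rewrite mulrBr; rewrite sumrB !sum_pred1.
  rewrite exchange_big /=.
  transitivity (\sum_i q i * ((i == o)%:R - (i == d)%:R)).
    apply: eq_bigr => i _; rewrite -big_distrr /= yN supplyE //.
  by under eq_bigr do rewrite mulrBr; rewrite sumrB sum_pred1' sum_pred1'.
rewrite -[L]add0r; apply: lerD.
  apply: sumr_ge0 => a _; apply: mulr_ge0 => //; rewrite subr_ge0; exact: tri.
by rewrite -[L]subr0; apply: lerB.
Qed.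

End G.

Section M.
Variables (R : realType) (V A : finType) (src tgt : A -> V) (c : A -> R)
  (A1 : {set A}) (o d : V).
Local Notation flw := (flows R V A src tgt o d).
Local Notation F := (fval R V A src tgt c A1 o d).
Local Notation dt := (dot R A A1).
Local Notation rs := (restr R A A1).
Local Notation cs := (cost R A c).

Definition ext (t : tolled A A1 -> R) : A -> R := fun a => oapp t 0 (insub a).

Lemma sum_ext t z : \sum_a ext t a * z a = dt t (rs z).
Proof.
rewrite (bigID (fun a => a \in A1)) /= [X in _ + X]big1 ?addr0; last first.
  by move=> a aA; rewrite /ext insubN //= mul0r.
transitivity (\sum_(b : tolled A A1) ext t (val b) * z (val b)).
  exact: (big_sub (fun a => a \in A1) (fun a => ext t a * z a)).
by apply: eq_bigr => b _; rewrite /ext valK.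
Qed.

Lemma ext_ge0 t : (forall b, 0 <= t b) -> forall a, 0 <= ext t a.
Proof. by move=> h a; rewrite /ext; case: insub => //=. Qed.

Lemma fval_pos t : (forall a, 0 <= t a) ->
  F t = ereal_inf [set (cs y + dt t (rs y))%:E | y in flw].
Proof. by move=> h; rewrite /fval; case: asboolP. Qed.

Lemma fval_neg t : ~ (forall a, 0 <= t a) -> F t = -oo%E.
Proof. by move=> h; rewrite /fval; case: asboolP. Qed.

Lemma fval_le t y : (forall a, 0 <= t a) -> flw y ->
  (F t <= (cs y + dt t (rs y))%:E)%E.
Proof. by move=> h fy; rewrite fval_pos //; apply: ereal_inf_lbound; exists y. Qed.

Lemma fval_ge t r : (forall a, 0 <= t a) ->
  (forall y, flw y -> r <= cs y + dt t (rs y)) -> (r%:E <= F t)%E.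
Proof.
move=> h H; rewrite fval_pos //; apply: le_ereal_inf_tmp => _ [y fy <-].
by rewrite lee_fin; exact: H.
Qed.

Lemma fval_fin t x : (forall a, 0 <= c a) -> (forall a, 0 <= t a) -> flw x ->
  exists r, F t = r%:E.
Proof.
move=> hc h fx.
have ub := fval_le t x h fx.
have lb : ((0:R)%:E <= F t)%E.
  apply: fval_ge => // y [_ y0]; apply: addr_ge0; apply: sumr_ge0 => a _.
    exact: mulr_ge0.
  exact: mulr_ge0 (h a) (y0 _).
move: ub lb; case: (F t) => [r| |] // _ _.
by exists r.
Qed.

Lemma core (hc : forall a, 0 <= c a) (od : o != d) (P0 : seq A)
  (hP0 : all (fun a => a \notin A1) P0) (wP0 : walk V A src tgt o d P0)
  (x : A -> R) (hx : flw x)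
  (H : forall e, 0 < e -> exists t : tolled A A1 -> R, (forall b, 0 <= t b) /\
        forall y, flw y -> cs x - e <= cs y + dt t (rs y) - dt t (rs x)) :
  exists t : tolled A A1 -> R, (forall b, 0 <= t b) /\
    forall y, flw y -> cs x + dt t (rs x) <= cs y + dt t (rs y).
Proof.
move: H; set S := cs x; set w := rs x; move=> H.
have w0 b : 0 <= w b by case: hx => _ h; exact: h.
have wz b : ~~ (0 < w b) -> w b = 0.
  by move=> wb; apply/eqP; rewrite eq_le w0 andbT leNgt.
pose y0 := cnt R A P0.
have fy0 : flw y0 := @walk_flows R V A src tgt o d P0 od wP0.
have ry0 b : rs y0 b = 0.
  rewrite /restr /y0 /cnt; apply/eqP; rewrite pnatr_eq0; apply/eqP/count_memPn.
  apply/negP => m; move/allP: hP0 => /(_ _ m) /negP; apply; exact: valP.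
have dty0 t : dt t (rs y0) = 0 by rewrite /dot big1 // => b _; rewrite ry0 mulr0.
pose B0 := cs y0 - S + 1.
pose beta b := if 0 < w b then B0 / w b else 0.
pose Q (y : A -> R) := flw y /\ forall b, ~~ (0 < w b) -> rs y b = 0.
have := @Topo.compact_lin R (tolled A A1) beta (A -> R) Q (fun y b => rs y b - w b)
  (fun y => S - cs y).
case.
  move=> n; have e0 : 0 < n.+1%:R^-1 :> R by rewrite invr_gt0 ltr0n.
  have [t [t0 Ht]] := H _ e0.
  pose t' b := if 0 < w b then t b else 0.
  exists t'; split.
    move=> b; rewrite /t' /beta; case: ifP => wb; last by rewrite lexx.
    rewrite t0 /= ler_pdivlMr //.
    have h1 : t b * w b <= dt t w.
      rewrite /dot (bigD1 b) //= lerDl; apply: sumr_ge0 => i _.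
      exact: mulr_ge0.
    have h2 := Ht y0 fy0; rewrite dty0 in h2.
    have h3 : n.+1%:R^-1 <= 1 :> R by rewrite invf_le1 ?ler1n ?ltr0n.
    rewrite /B0; move: h2 h3; set e := n.+1%:R^-1 => h2 h3; lra.
  move=> y [fy Zy]; have := Ht y fy.
  have -> : (\sum_i t' i * (rs y i - w i)) = dt t (rs y) - dt t w.
    rewrite /dot -sumrB; apply: eq_bigr => b _; rewrite /t'; case: ifP => wb.
      by rewrite mulrBr.
    by rewrite Zy ?wb // wz ?wb //; lra.
  set e := n.+1%:R^-1; lra.
move=> ts [tsb Hts].
pose M := S + dt ts w + 1.
have S0 : 0 <= S.
  by apply: sumr_ge0 => a _; apply: mulr_ge0 => //; case: hx.
have ts0 b : 0 <= ts b by case/andP: (tsb b).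
have dtsw : 0 <= dt ts w by apply: sumr_ge0 => b _; exact: mulr_ge0.
pose t2 b := if 0 < w b then ts b else M.
have t20 b : 0 <= t2 b by rewrite /t2; case: ifP => _ //; rewrite /M; lra.
have dt2 : dt t2 w = dt ts w.
  apply: eq_bigr => b _; rewrite /t2; case: ifP => // wb.
  by rewrite wz ?wb // !mulr0.
exists t2; split => //.
move=> y fy.
have -> : cs y + dt t2 (rs y) = \sum_a (c a + ext t2 a) * y a.
  by rewrite /cost -sum_ext -big_split /=; apply: eq_bigr => a _; rewrite mulrDl.
apply: (@pot R V A src tgt o d od (fun a => c a + ext t2 a)) => //.
  by move=> a; apply: addr_ge0 => //; exact: ext_ge0.
move=> P wP.
set yP := cnt R A P.
rewrite (_ : \sum_a (c a + ext t2 a) * yP a = cs yP + dt t2 (rs yP)); last first.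
  by rewrite /cost -sum_ext -big_split /=; apply: eq_bigr => a _; rewrite mulrDl.
have cP0 : 0 <= cs yP.
  by apply: sumr_ge0 => a _; apply: mulr_ge0 => //; exact: cnt_ge0.
have dP0 : 0 <= dt t2 (rs yP).
  by apply: sumr_ge0 => b _; apply: mulr_ge0 => //; exact: cnt_ge0.
case: (pselect (forall b, ~~ (0 < w b) -> rs yP b = 0)) => [Z|].
  have := Hts yP (conj (@walk_flows R V A src tgt o d P od wP) Z).
  have -> : \sum_i ts i * (rs yP i - w i) = dt t2 (rs yP) - dt t2 w.
    rewrite /dot -sumrB; apply: eq_bigr => b _; rewrite /t2; case: ifP => wb.
      by rewrite mulrBr.
    by rewrite Z ?wb // wz ?wb //; lra.
  rewrite dt2; lra.
move=> /existsNP [b] /not_implyP [wb nz].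
have h1 : 1 <= rs yP b.
  rewrite /restr /yP /cnt ler1n lt0n; apply/negP => /eqP h; apply: nz.
  by rewrite /restr /yP /cnt h.
have h2 : t2 b * rs yP b <= dt t2 (rs yP).
  rewrite /dot (bigD1 b) //= lerDl; apply: sumr_ge0 => i _.
  by apply: mulr_ge0 => //; exact: cnt_ge0.
have h3 : t2 b = M by rewrite /t2 (negPf wb).
have M0 : 0 <= M by rewrite /M; lra.
move: h1 h2 h3 dP0 cP0; set r := rs yP b; set D := dt t2 (rs yP); set C := cs yP.
move=> h1 h2 h3 dP0 cP0.
have h4 : M <= M * r by nra.
rewrite dt2; rewrite h3 in h2; rewrite /M in h4 h2 *; nra.
Qed.

End M.

Theorem lemma2 (R : realType) (V A : finType) (src tgt : A -> V)
  (c : A -> R) (hc : forall a, 0 <= c a)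
  (A1 : {set A}) (hA1ne : (A1 != finset.set0)) (hA1pr : (A1 != finset.setTfor A))
  (o d : V) (hod : o != d)
  (hpath : exists s : seq A, all (fun a => a \notin A1) s && walk V A src tgt o d s)
  (x : A -> R) (hx : flows R V A src tgt o d x) :
  bilevel_feasible R V A src tgt c A1 o d x <-> (cost R A c x)%:E = gval R V A src tgt c A1 o d (restr R A A1 x).
Proof.
have fin := @fval_fin R V A src tgt c A1 o d.
have fle := @fval_le R V A src tgt c A1 o d.
have [P0 /andP [hP0 wP0]] := hpath.
set F := fval R V A src tgt c A1 o d.
set cs := cost R A c.
set dt := dot R A A1.
set w := restr R A A1 x.
split.
- move=> [_ [[t z] [ep ez]]]; simpl in ez.
  rewrite /epi_negf /= in ep.
  have tp : forall a, 0 <= t a.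
    apply: contrapT => tp; move: ep; rewrite /F fval_neg //=.
  have [r Er] := fin t x hc tp hx.
  have Fge : cs x + dt t w <= r.
    move: ep; rewrite ez /F Er -EFinN lee_fin; rewrite /cs /dt /w; lra.
  apply: le_anti; apply/andP; split.
    apply: le_ereal_sup_tmp; exists (F t - (dt t w)%:E)%E; first by exists t.
    by rewrite /F Er -EFinB lee_fin; lra.
  apply: ge_ereal_sup => _ [s _ <-].
  case: (pselect (forall a, 0 <= s a)) => sp.
    have [r' Er'] := fin s x hc sp hx.
    have := fle s x sp hx; rewrite Er' -EFinB !lee_fin; rewrite /cs /dt /w; lra.
  by rewrite fval_neg //= leNye.
- move=> HG; split.
  + move=> [t z] ep; rewrite /epi_negf /= in ep; rewrite /=.
    have tp : forall a, 0 <= t a.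
      apply: contrapT => tp; move: ep; rewrite fval_neg //=.
    have [r Er] := fin t x hc tp hx.
    have := fle t x tp hx; rewrite Er lee_fin => h.
    move: ep; rewrite Er -EFinN lee_fin; lra.
  + have H : forall e, 0 < e -> exists t : tolled A A1 -> R, (forall b, 0 <= t b) /\
        forall y, flows R V A src tgt o d y ->
          cs x - e <= cs y + dt t (restr R A A1 y) - dt t w.
      move=> e e0.
      have : ((cs x - e)%:E < gval R V A src tgt c A1 o d w)%E.
        by rewrite -HG lte_fin; lra.
      move/ereal_sup_gt => [_ [t _ <-]] lt.
      case: (pselect (forall a, 0 <= t a)) => tp; last first.
        by move: lt; rewrite fval_neg //= ltNge leNye.
      exists t; split => // y fy.
      have [r Er] := fin t x hc tp hx.
      have := fle t y tp fy; rewrite Er in lt *; rewrite -EFinB lte_fin in lt.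
      rewrite lee_fin; rewrite /cs /dt in lt *; lra.
    have [t [tp Ht]] := @core R V A src tgt c A1 o d hc hod P0 hP0 wP0 x hx H.
    exists (t, - cs x - dt t w); split => //.
    rewrite /epi_negf /= leeNl -EFinN (_ : - (- cs x - dt t w) = cs x + dt t w);
      last by lra.
    by apply: fval_ge.
Qed.
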